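(* Let $(x_n)_{n\ge1}$ be a real sequence and $(L_m)_{m\ge1}$ pairwise distinct elements of $[-\infty,+\infty]$ with $\sum_{m=1}^\infty i(x_n;L_m)=1$. Then for every $L\in\mathbb R$ different from all $L_m$, one has $i(x_n;L)=0$, and every subsequence $(x_{k(n)})_{n\ge1}$ converging to $L$ satisfies $\delta_-(\{k(n)\mid n\in\mathbb N\})=0$.
   Context: Let $\mathbb N=\{1,2,\dots\}$. For $K\subseteq\mathbb N$, $\delta_-(K)=\liminf_{n\to\infty}\frac{|K\cap\{1,\dots,n\}|}{n}$, $\delta_+(K)=\limsup_{n\to\infty}\frac{|K\cap\{1,\dots,n\}|}{n}$. For $L\in\mathbb R$: $i(x_n;L)=1-\sup_{\varepsilon>0}\delta_+(\{n\mid |x_n-L|\ge\varepsilon\})$; $i(x_n;+\infty)=1-\sup_{M\in\mathbb R}\delta_+(\{n\mid x_n\le M\})$; $i(x_n;-\infty)=1-\sup_{M\in\mathbb R}\delta_+(\{n\mid x_n\ge M\})$. *)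

(* Defs.v *)
From Stdlib Require Import Reals Lra Lia Classical ClassicalEpsilon.
Open Scope R_scope.

(* Sets K ⊆ ℕ = {1,2,...} are predicates on nat; index 0 is ignored. *)

Fixpoint count (K : nat -> Prop) (n : nat) : nat :=
  match n with
  | O => O
  | S m => (count K m + if excluded_middle_informative (K (S m)) then 1 else 0)%nat
  end.

Definition ratio (K : nat -> Prop) (n : nat) : R := INR (count K n) / INR n.

(* supremum of a nonempty bounded-above set of reals (0 by convention otherwise) *)
Definition Rsup (E : R -> Prop) : R :=
  match excluded_middle_informative (bound E /\ exists x, E x) with
  | left H => proj1_sig (completeness E (proj1 H) (proj2 H))
  | right _ => 0
  end.

Definition Rinf (E : R -> Prop) : R := - Rsup (fun y => E (- y)).

Definition limsup (u : nat -> R) : R :=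
  Rinf (fun a => exists N : nat, a = Rsup (fun y => exists n, (n >= N)%nat /\ y = u n)).

Definition liminf (u : nat -> R) : R := - limsup (fun n => - u n).

Definition delta_plus (K : nat -> Prop) : R := limsup (ratio K).
Definition delta_minus (K : nat -> Prop) : R := liminf (ratio K).

Inductive ExtR : Type :=
  | Fin : R -> ExtR
  | PInf : ExtR
  | MInf : ExtR.

Definition idx (x : nat -> R) (L : ExtR) : R :=
  match L with
  | Fin l => 1 - Rsup (fun d => exists eps, eps > 0 /\
                        d = delta_plus (fun n => Rabs (x n - l) >= eps))
  | PInf => 1 - Rsup (fun d => exists M : R, d = delta_plus (fun n => x n <= M))
  | MInf => 1 - Rsup (fun d => exists M : R, d = delta_plus (fun n => x n >= M))
  end.

(* Main.v *)
Require Import Defs.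
From Stdlib Require Import Reals Lra Lia Classical ClassicalEpsilon FunctionalExtensionality PropExtensionality.
Open Scope R_scope.

Lemma INR_unb (A : R) : exists n : nat, INR n > A.
Proof.
  destruct (Rle_or_lt A 0) as [H|H].
  - exists 1%nat. simpl. lra.
  - destruct (archimed_cor1 (/ A)) as [N [HN HN0]].
    + apply Rinv_0_lt_compat; lra.
    + exists N. assert (0 < INR N) by (apply lt_0_INR; lia).
      rewrite <- (Rinv_inv A). rewrite <- (Rinv_inv (INR N)).
      apply Rinv_lt_contravar; [|exact HN].
      apply Rmult_lt_0_compat; apply Rinv_0_lt_compat; lra.
Qed.

Lemma Rsup_lub E : bound E -> (exists x, E x) -> is_lub E (Rsup E).
Proof.
  intros Hb Hn. unfold Rsup. destruct (excluded_middle_informative _) as [H|H].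
  - apply (proj2_sig (completeness E (proj1 H) (proj2 H))).
  - exfalso; apply H; split; assumption.
Qed.

Lemma Rsup_ub E x : bound E -> E x -> x <= Rsup E.
Proof. intros Hb Hx. apply (Rsup_lub E Hb (ex_intro _ x Hx)). exact Hx. Qed.

Lemma Rsup_le E b : (exists x, E x) -> (forall x, E x -> x <= b) -> Rsup E <= b.
Proof.
  intros Hn Hb. assert (Hb' : bound E) by (exists b; exact Hb).
  apply (Rsup_lub E Hb' Hn). exact Hb.
Qed.

Lemma Rsup_approx E eps : bound E -> (exists x, E x) -> eps > 0 ->
  exists x, E x /\ x > Rsup E - eps.
Proof.
  intros Hb Hn He. apply NNPP. intro Hc.
  assert (Rsup E <= Rsup E - eps); [|lra].
  apply (Rsup_lub E Hb Hn). intros y Hy.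
  apply Rnot_gt_le. intro Hy'. apply Hc. exists y; split; assumption.
Qed.

Section LS.
Variable u : nat -> R.
Hypothesis Hu : forall n, -1 <= u n <= 1.

Let s N := Rsup (fun y => exists n, (n >= N)%nat /\ y = u n).

Let s_ub N n : (n >= N)%nat -> u n <= s N.
Proof. intros H. apply Rsup_ub. exists 1. intros y [m [_ ->]]. apply Hu. exists n; split; auto. Qed.

Let s_bd N : -1 <= s N <= 1.
Proof. split.
  - apply Rle_trans with (u N). apply Hu. apply s_ub. lia.
  - apply Rsup_le. exists (u N), N; split; auto. intros y [m [_ ->]]. apply Hu.
Qed.

Let E := fun y => exists N, - y = s N.

Let limsup_E : limsup u = - Rsup E.
Proof. reflexivity. Qed.

Let E_bd : bound E.
Proof. exists 1. intros y [N HN]. pose proof (s_bd N). lra. Qed.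

Let E_ne : exists y, E y.
Proof. exists (- s 0%nat), 0%nat. ring. Qed.

Lemma limsup_ev : forall eps, eps > 0 -> exists N, forall n, (n >= N)%nat -> u n <= limsup u + eps.
Proof.
  intros eps He. destruct (Rsup_approx E eps E_bd E_ne He) as [y [[N HN] Hy]].
  exists N. intros n Hn. rewrite limsup_E. pose proof (s_ub N n Hn). lra.
Qed.

Lemma limsup_le c : (forall n, u n <= c) -> limsup u <= c.
Proof.
  intros Hc. rewrite limsup_E.
  assert (H1 : - s 0%nat <= Rsup E) by (apply Rsup_ub; [exact E_bd| exists 0%nat; ring]).
  assert (H2 : s 0%nat <= c).
  { apply Rsup_le. exists (u 0%nat), 0%nat; split; auto. intros y [m [_ ->]]. apply Hc. }
  lra.
Qed.
End LS.

Lemma count_le P n : (count P n <= n)%nat.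
Proof. induction n; simpl; [lia|]. destruct (excluded_middle_informative _); lia. Qed.

Lemma count_compl P n : (count P n + count (fun t => ~ P t) n)%nat = n.
Proof.
  induction n; simpl; [lia|].
  destruct (excluded_middle_informative (P (S n))); destruct (excluded_middle_informative (~ P (S n))); try tauto; lia.
Qed.

Lemma count_ev P Q N0 : (forall t, (t >= N0)%nat -> P t -> Q t) ->
  forall n, (count P n <= count Q n + N0)%nat.
Proof.
  intros H n. induction n; simpl; [lia|].
  destruct (Compare_dec.le_lt_dec N0 (S n)).
  - destruct (excluded_middle_informative (P (S n))); destruct (excluded_middle_informative (Q (S n))); try lia.
    exfalso; auto.
  - pose proof (count_le P (S n)). simpl in H0.
    destruct (excluded_middle_informative (P (S n))); destruct (excluded_middle_informative (Q (S n))); lia.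
Qed.

Lemma ratio_bounds P n : 0 <= ratio P n <= 1.
Proof.
  unfold ratio. destruct n.
  - simpl. unfold Rdiv. rewrite Rmult_0_l. lra.
  - assert (Hp : 0 < INR (S n)) by (apply lt_0_INR; lia).
    assert (Hc : INR (count P (S n)) <= INR (S n)) by (apply le_INR, count_le).
    pose proof (pos_INR (count P (S n))).
    split.
    + unfold Rdiv. apply Rmult_le_pos; [lra|]. left; apply Rinv_0_lt_compat; lra.
    + unfold Rdiv. rewrite <- (Rinv_r (INR (S n))) by lra.
      apply Rmult_le_compat_r; [left; apply Rinv_0_lt_compat; lra| exact Hc].
Qed.

Lemma ratio_compl P n : (n >= 1)%nat -> ratio (fun t => ~ P t) n = 1 - ratio P n.
Proof.
  intros Hn. unfold ratio.
  assert (Hp : 0 < INR n) by (apply lt_0_INR; lia).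
  pose proof (count_compl P n) as H. apply (f_equal INR) in H. rewrite plus_INR in H.
  replace (INR (count (fun t => ~ P t) n)) with (INR n - INR (count P n)) by lra.
  field. lra.
Qed.

Lemma pred_eq (P Q : nat -> Prop) : (forall t, P t <-> Q t) -> P = Q.
Proof. intros H. extensionality t. apply propositional_extensionality. apply H. Qed.

Lemma ratio_bd' P n : -1 <= ratio P n <= 1.
Proof. pose proof (ratio_bounds P n). lra. Qed.

Lemma dplus_le1 P : delta_plus P <= 1.
Proof. unfold delta_plus. apply limsup_le. apply ratio_bd'. intro n; apply ratio_bounds. Qed.

Lemma idx_fin_nonneg x l : 0 <= idx x (Fin l).
Proof.
  unfold idx. assert (Rsup (fun d => exists eps, eps > 0 /\
                        d = delta_plus (fun n => Rabs (x n - l) >= eps)) <= 1); [|lra].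
  apply Rsup_le. eexists; exists 1; split; [lra|reflexivity].
  intros d [e [_ ->]]. apply dplus_le1.
Qed.

Definition near (T : ExtR) (p : nat) (r : R) : Prop :=
  match T with
  | Fin a => Rabs (r - a) < / (INR p + 1)
  | PInf => r > INR p
  | MInf => r < - INR p
  end.

Lemma inv_pos p : 0 < / (INR p + 1).
Proof. apply Rinv_0_lt_compat. pose proof (pos_INR p); lra. Qed.

Lemma idx_near x T p : idx x T <= 1 - delta_plus (fun t => ~ near T p (x t)).
Proof.
  destruct T as [a| |]; unfold idx; simpl.
  - rewrite (pred_eq (fun t => ~ Rabs (x t - a) < / (INR p + 1)) (fun n => Rabs (x n - a) >= / (INR p + 1)))
      by (intro t; split; intro; lra).
    assert (delta_plus (fun n => Rabs (x n - a) >= / (INR p + 1)) <= Rsup (fun d => exists eps, eps > 0 /\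
                        d = delta_plus (fun n => Rabs (x n - a) >= eps))); [|lra].
    apply Rsup_ub. exists 1. intros d [e [_ ->]]. apply dplus_le1.
    exists (/ (INR p + 1)). split; [apply inv_pos|reflexivity].
  - rewrite (pred_eq (fun t => ~ x t > INR p) (fun n => x n <= INR p)) by (intro t; split; intro; lra).
    assert (delta_plus (fun n => x n <= INR p) <= Rsup (fun d => exists M : R, d = delta_plus (fun n => x n <= M))); [|lra].
    apply Rsup_ub. exists 1. intros d [e ->]. apply dplus_le1. exists (INR p); reflexivity.
  - rewrite (pred_eq (fun t => ~ x t < - INR p) (fun n => x n >= - INR p)) by (intro t; split; intro; lra).
    assert (delta_plus (fun n => x n >= - INR p) <= Rsup (fun d => exists M : R, d = delta_plus (fun n => x n >= M))); [|lra].
    apply Rsup_ub. exists 1. intros d [e ->]. apply dplus_le1. exists (- INR p); reflexivity.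
Qed.

Lemma near_lower x T p eps : eps > 0 -> exists N, forall n, (n >= N)%nat ->
  ratio (fun t => near T p (x t)) n >= idx x T - eps.
Proof.
  intros He. destruct (limsup_ev (ratio (fun t => ~ near T p (x t))) (ratio_bd' _) eps He) as [N HN].
  exists (max N 1). intros n Hn.
  pose proof (HN n ltac:(lia)). rewrite ratio_compl in H by lia.
  pose proof (idx_near x T p). unfold delta_plus in H0. lra.
Qed.

Lemma inv_small d : d > 0 -> exists q, forall p, (p >= q)%nat -> / (INR p + 1) < d.
Proof.
  intros Hd. destruct (archimed_cor1 d Hd) as [N [HN HN0]]. exists N. intros p Hp.
  apply Rle_lt_trans with (/ INR N); [|exact HN].
  assert (0 < INR N) by (apply lt_0_INR; lia).
  apply Rinv_le_contravar; [lra|]. apply le_INR in Hp. lra.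
Qed.

Lemma inv_le1 p : / (INR p + 1) <= 1.
Proof.
  pose proof (pos_INR p). rewrite <- Rinv_1. apply Rinv_le_contravar; lra.
Qed.

Lemma sep_fin_pinf a : exists q, forall p, (p >= q)%nat -> forall r, near (Fin a) p r -> near PInf p r -> False.
Proof.
  destruct (INR_unb (a + 1)) as [q Hq]. exists q. intros p Hp r H1 H2. simpl in *.
  apply Rabs_def2 in H1. pose proof (inv_le1 p). apply le_INR in Hp. lra.
Qed.

Lemma sep_fin_minf a : exists q, forall p, (p >= q)%nat -> forall r, near (Fin a) p r -> near MInf p r -> False.
Proof.
  destruct (INR_unb (- a + 1)) as [q Hq]. exists q. intros p Hp r H1 H2. simpl in *.
  apply Rabs_def2 in H1. pose proof (inv_le1 p). apply le_INR in Hp. lra.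
Qed.

Lemma sep_pinf_minf : exists q, forall p, (p >= q)%nat -> forall r, near PInf p r -> near MInf p r -> False.
Proof. exists 0%nat. intros p _ r H1 H2. simpl in *. pose proof (pos_INR p). lra. Qed.

Lemma sep_fin_fin a b : a <> b -> exists q, forall p, (p >= q)%nat -> forall r, near (Fin a) p r -> near (Fin b) p r -> False.
Proof.
  intros Hab. assert (Hd : Rabs (a - b) / 2 > 0).
  { assert (Rabs (a - b) > 0) by (apply Rabs_pos_lt; lra). lra. }
  destruct (inv_small _ Hd) as [q Hq]. exists q. intros p Hp r H1 H2. simpl in *.
  specialize (Hq p Hp). apply Rabs_def2 in H1. apply Rabs_def2 in H2.
  unfold Rabs in Hq. destruct (Rcase_abs (a - b)); lra.
Qed.

Lemma sep T T' : T <> T' -> exists q, forall p, (p >= q)%nat -> forall r, near T p r -> near T' p r -> False.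
Proof.
  intros H. destruct T as [a| |]; destruct T' as [b| |].
  - apply sep_fin_fin. intro; subst; auto.
  - apply sep_fin_pinf.
  - apply sep_fin_minf.
  - destruct (sep_fin_pinf b) as [q Hq]. exists q; intros p Hp r H1 H2; eapply Hq; eauto.
  - exfalso; auto.
  - apply sep_pinf_minf.
  - destruct (sep_fin_minf b) as [q Hq]. exists q; intros p Hp r H1 H2; eapply Hq; eauto.
  - destruct sep_pinf_minf as [q Hq]. exists q; intros p Hp r H1 H2; eapply Hq; eauto.
  - exfalso; auto.
Qed.

Lemma fin_max (Q : nat -> nat -> Prop) M :
  (forall i, (i <= M)%nat -> exists q, forall p, (p >= q)%nat -> Q i p) ->
  exists q, forall i, (i <= M)%nat -> forall p, (p >= q)%nat -> Q i p.
Proof.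
  induction M; intros H.
  - destruct (H 0%nat (le_n 0)) as [q Hq]. exists q. intros i Hi p Hp.
    assert (i = 0%nat) by lia. subst. auto.
  - destruct IHM as [q1 H1]. { intros i Hi. apply H. lia. }
    destruct (H (S M) (le_n _)) as [q2 H2]. exists (max q1 q2). intros i Hi p Hp.
    destruct (Nat.eq_dec i (S M)). subst; apply H2; lia. apply H1; lia.
Qed.

Lemma fam_sep (F : nat -> ExtR) M :
  (forall i j, (i <= M)%nat -> (j <= M)%nat -> i <> j -> F i <> F j) ->
  exists p, forall i j, (i <= M)%nat -> (j <= M)%nat -> i <> j -> forall r, near (F i) p r -> near (F j) p r -> False.
Proof.
  intros HF.
  destruct (fin_max (fun i p => forall j, (j <= M)%nat -> i <> j -> forall r, near (F i) p r -> near (F j) p r -> False) M)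
    as [q Hq].
  - intros i Hi.
    destruct (fin_max (fun j p => i <> j -> forall r, near (F i) p r -> near (F j) p r -> False) M) as [q Hq].
    + intros j Hj. destruct (Nat.eq_dec i j).
      * exists 0%nat. intros; contradiction.
      * destruct (sep (F i) (F j) (HF i j Hi Hj n)) as [q Hq]. exists q. intros p Hp _. apply Hq; auto.
    + exists q. intros p Hp j Hj. apply Hq; auto.
  - exists q. intros i j Hi Hj. apply (Hq i Hi q (le_n _) j Hj).
Qed.

Section CS.
Variable P : nat -> nat -> Prop.
Variable M : nat.
Hypothesis Hdisj : forall i j, (i <= M)%nat -> (j <= M)%nat -> i <> j -> forall t, P i t -> P j t -> False.

Lemma ind_sum m : forall M', (M' <= M)%nat ->
  sum_f_R0 (fun j => INR (if excluded_middle_informative (P j m) then 1%nat else 0%nat)) M' <= 1 /\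
  ((forall j, (j <= M')%nat -> ~ P j m) ->
   sum_f_R0 (fun j => INR (if excluded_middle_informative (P j m) then 1%nat else 0%nat)) M' = 0).
Proof.
  induction M' as [|M' IH]; intros HM; simpl.
  - destruct (excluded_middle_informative (P 0%nat m)); simpl; split; try lra.
    intro H; exfalso; apply (H 0%nat); auto.
  - destruct (IH ltac:(lia)) as [IH1 IH2].
    destruct (excluded_middle_informative (P (S M') m)) as [Hp|Hp].
    + rewrite IH2. simpl. split; [lra|]. intro H; exfalso; apply (H (S M')); auto.
      intros j Hj Hj'. apply (Hdisj j (S M') ltac:(lia) HM ltac:(lia) m Hj' Hp).
    + simpl. split; [lra|]. intro H. rewrite IH2; [ring|]. intros j Hj; apply H; lia.
Qed.

Lemma count_sum n : sum_f_R0 (fun j => INR (count (P j) n)) M <= INR n.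
Proof.
  induction n.
  - simpl. rewrite sum_cte. lra.
  - rewrite (sum_eq _ (fun j => INR (count (P j) n) +
        INR (if excluded_middle_informative (P j (S n)) then 1%nat else 0%nat))).
    + rewrite plus_sum. destruct (ind_sum (S n) M (le_n _)). rewrite S_INR. lra.
    + intros i _. simpl. apply plus_INR.
Qed.
End CS.

Lemma sum_div f c M : sum_f_R0 (fun j => f j / c) M = sum_f_R0 f M / c.
Proof. induction M; simpl. reflexivity. rewrite IHM. unfold Rdiv. ring. Qed.

Lemma G_lemma (M : nat) (w : nat -> nat -> R) (c : nat -> R) :
  (forall n, (n >= 1)%nat -> sum_f_R0 (fun j => w j n) M <= 1) ->
  (forall j, (j <= M)%nat -> forall eps, eps > 0 -> exists N, forall n, (n >= N)%nat -> w j n >= c j - eps) ->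
  sum_f_R0 c M <= 1.
Proof.
  intros Hs Hev.
  assert (Hall : forall e, e > 0 -> sum_f_R0 c M <= 1 + e).
  { intros e He.
    assert (Hp : 0 < INR (S M)) by (apply lt_0_INR; lia).
    set (eps := e / INR (S M)).
    assert (Heps : eps > 0) by (unfold eps; apply Rdiv_lt_0_compat; lra).
    destruct (fin_max (fun j n => w j n >= c j - eps) M) as [N HN].
    { intros j Hj. apply Hev; auto. }
    pose proof (Hs (max N 1) ltac:(lia)).
    assert (sum_f_R0 (fun j => c j - eps) M <= sum_f_R0 (fun j => w j (max N 1)) M).
    { apply sum_Rle. intros j Hj. specialize (HN j Hj (max N 1) ltac:(lia)). lra. }
    rewrite minus_sum, sum_cte in H0.
    assert (eps * INR (S M) = e) by (unfold eps; field; lra). lra. }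
  destruct (Rle_or_lt (sum_f_R0 c M) 1) as [H|H]; auto.
  specialize (Hall ((sum_f_R0 c M - 1) / 2) ltac:(lra)). lra.
Qed.

Lemma key (x : nat -> R) (L : nat -> ExtR)
  (Hdist : forall m m' : nat, (m >= 1)%nat -> (m' >= 1)%nat -> m <> m' -> L m <> L m')
  (l : R) (Hl : forall m : nat, (m >= 1)%nat -> L m <> Fin l)
  (K : nat -> Prop) (c0 : R)
  (HK : forall p eps, eps > 0 -> exists N, forall n, (n >= N)%nat ->
          ratio (fun t => K t /\ near (Fin l) p (x t)) n >= c0 - eps) :
  forall M, c0 + sum_f_R0 (fun m => idx x (L (S m))) M <= 1.
Proof.
  intro M.
  set (F := fun j => match j with O => Fin l | S _ => L j end).
  destruct (fam_sep F (S M)) as [p Hp].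
  { intros i j Hi Hj Hij. destruct i as [|i]; destruct j as [|j]; simpl.
    - lia.
    - intro H; apply (Hl (S j)); [lia| symmetry; exact H].
    - apply Hl; lia.
    - apply Hdist; lia. }
  set (P := fun j t => match j with O => K t /\ near (Fin l) p (x t) | S _ => near (L j) p (x t) end).
  assert (HPF : forall j t, P j t -> near (F j) p (x t)).
  { intros [|j] t H; simpl in *; tauto. }
  pose proof (G_lemma (S M) (fun j n => ratio (P j) n)
               (fun j => match j with O => c0 | S _ => idx x (L j) end)) as HG.
  rewrite decomp_sum in HG by lia. simpl Init.Nat.pred in HG. apply HG.
  - intros n Hn. unfold ratio. rewrite sum_div.
    assert (0 < INR n) by (apply lt_0_INR; lia).
    assert (sum_f_R0 (fun j => INR (count (P j) n)) (S M) <= INR n).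
    { apply count_sum. intros i j Hi Hj Hij t H1 H2.
      apply (Hp i j Hi Hj Hij (x t)); apply HPF; auto. }
    unfold Rdiv. rewrite <- (Rinv_r (INR n)) by lra.
    apply Rmult_le_compat_r; [left; apply Rinv_0_lt_compat|]; lra.
  - intros [|j] Hj eps He.
    + apply HK; auto.
    + apply (near_lower x (L (S j)) p eps He).
Qed.

Lemma lim_le c0 f : infinite_sum f 1 -> (forall M, c0 + sum_f_R0 f M <= 1) -> c0 <= 0.
Proof.
  intros Hs HM. apply Rnot_gt_le. intro Hc.
  destruct (Hs c0 Hc) as [N HN]. specialize (HN N (le_n _)). specialize (HM N).
  unfold Rdist in HN. apply Rabs_def2 in HN. lra.
Qed.

Lemma k_mono (k : nat -> nat) : (forall n : nat, (n >= 1)%nat -> (k n < k (S n))%nat) ->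
  forall a b, (1 <= a)%nat -> (a < b)%nat -> (k a < k b)%nat.
Proof.
  intros Hk a b Ha Hab. induction b. lia.
  destruct (Nat.eq_dec a b). subst. apply Hk; lia.
  specialize (IHb ltac:(lia)). specialize (Hk b ltac:(lia)). lia.
Qed.

Theorem mainTheorem3 (x : nat -> R) (L : nat -> ExtR)
  (Hdist : forall m m' : nat, (m >= 1)%nat -> (m' >= 1)%nat -> m <> m' -> L m <> L m')
  (Hsum : infinite_sum (fun m => idx x (L (S m))) 1) :
  forall l : R, (forall m : nat, (m >= 1)%nat -> L m <> Fin l) ->
    idx x (Fin l) = 0 /\
    (forall k : nat -> nat,
       (k 1 >= 1)%nat ->
       (forall n : nat, (n >= 1)%nat -> (k n < k (S n))%nat) ->
       Un_cv (fun n => x (k n)) l ->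
       delta_minus (fun j => exists n : nat, (n >= 1)%nat /\ j = k n) = 0).
Proof.
  intros l Hl. split.
  - apply Rle_antisym; [|apply idx_fin_nonneg].
    apply (lim_le _ _ Hsum). apply (key x L Hdist l Hl (fun _ => True)).
    intros p eps He.
    rewrite (pred_eq (fun t => True /\ near (Fin l) p (x t)) (fun t => near (Fin l) p (x t))) by (intro; tauto).
    apply near_lower; auto.
  - intros k Hk1 Hinc Hcv.
    set (K := fun j => exists n : nat, (n >= 1)%nat /\ j = k n).
    apply Rle_antisym.
    + apply (lim_le _ _ Hsum). apply (key x L Hdist l Hl K).
      intros p eps He.
      destruct (Hcv (/ (INR p + 1)) (inv_pos p)) as [N HN].
      set (N0 := k (max N 1)).
      assert (Hin : forall t, (t >= N0)%nat -> K t -> (K t /\ near (Fin l) p (x t))).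
      { intros t Ht [n [Hn1 ->]]. split. exists n; auto. simpl.
        assert (n >= N)%nat.
        { destruct (Compare_dec.le_lt_dec (max N 1) n). lia.
          pose proof (k_mono k Hinc n (max N 1) Hn1 l0). unfold N0 in Ht. lia. }
        apply (HN n H). }
      pose proof (count_ev _ _ N0 Hin) as Hc.
      destruct (limsup_ev (fun n => - ratio K n) ltac:(intro n; pose proof (ratio_bounds K n); lra) (eps/2) ltac:(lra)) as [N1 HN1].
      destruct (INR_unb (2 * INR N0 / eps)) as [N2 HN2].
      exists (max (max N1 N2) 1). intros n Hn.
      specialize (HN1 n ltac:(lia)).
      assert (Hnp : 0 < INR n) by (apply lt_0_INR; lia).
      assert (HN2' : INR n >= INR N2) by (apply Rle_ge, le_INR; lia).
      assert (HN0 : INR N0 / INR n <= eps / 2).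
      { apply (Rmult_le_reg_r (INR n)); auto. unfold Rdiv at 1. rewrite Rmult_assoc, Rinv_l by lra.
        assert (2 * INR N0 / eps * eps = 2 * INR N0) by (field; lra).
        assert (2 * INR N0 / eps * eps <= INR n * eps) by (apply Rmult_le_compat_r; lra).
        lra. }
      specialize (Hc n). apply le_INR in Hc. rewrite plus_INR in Hc.
      assert (ratio K n <= ratio (fun t => K t /\ near (Fin l) p (x t)) n + INR N0 / INR n).
      { unfold ratio. unfold Rdiv. rewrite <- Rmult_plus_distr_r.
        apply Rmult_le_compat_r; [left; apply Rinv_0_lt_compat; lra| lra]. }
      unfold delta_minus, liminf. cbv beta in HN1. lra.
    + unfold delta_minus, liminf. assert (limsup (fun n => - ratio K n) <= 0); [|lra].
      apply limsup_le. intro n; pose proof (ratio_bounds K n); lra.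
      intro n; pose proof (ratio_bounds K n); lra.
Qed.
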